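(* Let three binary classifiers $i,j,k$ label a test with $Q_a,Q_b\ge1$, and let $\alpha x^2-\alpha x+\gamma$ be the prevalence quadratic built from their observed decision frequencies (as in the context). If the classifiers are error independent on the test and this quadratic is not identically zero, then both of its roots are rational numbers (indeed they are $p_a$ and $p_b$). Equivalently, if the prevalence quadratic is not identically zero and has an irrational (or non-real) root, then at least one pair or 3-way error correlation $\Gamma_{c,d;\ell}$ or $\Gamma_{i,j,k;\ell}$ is nonzero.
   Context: Test of $Q$ items with true labels $t_q\in\{a,b\}$; $Q_\ell=\#\{q:t_q=\ell\}$, $p_\ell=Q_\ell/Q$. Classifier $c\in\{i,j,k\}$ labels item $q$ with $\ell^q_c\in\{a,b\}$; label accuracy $p_{c,\ell}=\frac1{Q_\ell}\#\{q:\ell^q_c=\ell,t_q=\ell\}$. $f_{\ell_i\ell_j\ell_k}=\frac1Q\#\{q:\ell^q_i=\ell_i,\ell^q_j=\ell_j,\ell^q_k=\ell_k\}$. Define $f_{b_i}=f_{baa}+f_{bab}+f_{bba}+f_{bbb}$, $f_{b_j}=f_{aba}+f_{abb}+f_{bba}+f_{bbb}$, $f_{b_k}=f_{aab}+f_{abb}+f_{bab}+f_{bbb}$, $\Delta_{i,j}=f_{bba}+f_{bbb}-f_{b_i}f_{b_j}$, $\Delta_{i,k}=f_{bab}+f_{bbb}-f_{b_i}f_{b_k}$, $\Delta_{j,k}=f_{abb}+f_{bbb}-f_{b_j}f_{b_k}$, $\Delta_{i,j,k}=f_{bbb}-(f_{b_i}f_{b_j}f_{b_k}+f_{b_i}\Delta_{j,k}+f_{b_j}\Delta_{i,k}+f_{b_k}\Delta_{i,j})$,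 $\alpha=\Delta_{i,j,k}^2+4\Delta_{i,j}\Delta_{i,k}\Delta_{j,k}$, $\gamma=\Delta_{i,j}\Delta_{i,k}\Delta_{j,k}$. Pair error correlation $\Gamma_{c,d;\ell}=\frac1{Q_\ell}\sum_q(\mathbf 1[\ell^q_c=\ell]-p_{c,\ell})(\mathbf 1[\ell^q_d=\ell]-p_{d,\ell})\mathbf 1[t_q=\ell]$; 3-way error correlation $\Gamma_{i,j,k;\ell}=\frac1{Q_\ell}\sum_q\prod_{c\in\{i,j,k\}}(\mathbf 1[\ell^q_c=\ell]-p_{c,\ell})\,\mathbf 1[t_q=\ell]$. Error independence means all pair and 3-way correlations vanish for both labels $\ell\in\{a,b\}$. *)

(* Defs.v *)
From mathcomp Require Import all_boot all_order all_algebra all_field.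
Set Implicit Arguments. Unset Strict Implicit. Unset Printing Implicit Defensive.
Import Order.TTheory GRing.Theory Num.Theory.
Local Open Scope ring_scope.

Notation la := false.
Notation lb := true.

Section Defs.
Variable Q : nat.
(* t q = true label of item q; ci, cj, ck q = label assigned by classifier *)
Variables (t ci cj ck : 'I_Q -> bool).

Definition Qcnt (l : bool) : nat := #|[set q : 'I_Q | t q == l]|.
Definition prevalence (l : bool) : rat := (Qcnt l)%:R / Q%:R.
Definition acc (c : 'I_Q -> bool) (l : bool) : rat :=
  (#|[set q : 'I_Q | (c q == l) && (t q == l)]|)%:R / (Qcnt l)%:R.

Definition freq (x y z : bool) : rat :=
  (#|[set q : 'I_Q | [&& ci q == x, cj q == y & ck q == z]]|)%:R / Q%:R.

Definition f_bi : rat := freq lb la la + freq lb la lb + freq lb lb la + freq lb lb lb.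
Definition f_bj : rat := freq la lb la + freq la lb lb + freq lb lb la + freq lb lb lb.
Definition f_bk : rat := freq la la lb + freq la lb lb + freq lb la lb + freq lb lb lb.
Definition D_ij : rat := freq lb lb la + freq lb lb lb - f_bi * f_bj.
Definition D_ik : rat := freq lb la lb + freq lb lb lb - f_bi * f_bk.
Definition D_jk : rat := freq la lb lb + freq lb lb lb - f_bj * f_bk.
Definition D_ijk : rat :=
  freq lb lb lb - (f_bi * f_bj * f_bk + f_bi * D_jk + f_bj * D_ik + f_bk * D_ij).
Definition alpha : rat := D_ijk ^+ 2 + 4 * D_ij * D_ik * D_jk.
Definition gamma : rat := D_ij * D_ik * D_jk.

Definition ind (b : bool) : rat := (b : nat)%:R.

Definition Gamma2 (c d : 'I_Q -> bool) (l : bool) : rat :=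
  (Qcnt l)%:R^-1 * \sum_(q : 'I_Q)
     (ind (c q == l) - acc c l) * (ind (d q == l) - acc d l) * ind (t q == l).

Definition Gamma3 (l : bool) : rat :=
  (Qcnt l)%:R^-1 * \sum_(q : 'I_Q)
     (ind (ci q == l) - acc ci l) * (ind (cj q == l) - acc cj l)
     * (ind (ck q == l) - acc ck l) * ind (t q == l).

Definition error_independent : Prop :=
  forall l : bool,
    [/\ Gamma2 ci cj l = 0, Gamma2 ci ck l = 0, Gamma2 cj ck l = 0 & Gamma3 l = 0].

End Defs.

(* Main.v *)
Require Import Defs.
From mathcomp Require Import all_boot all_order all_algebra all_field.
From mathcomp Require Import ring lra.
Import Order.TTheory GRing.Theory Num.Theory.
Local Open Scope ring_scope.

Section Abs.
Variables (I : finType) (u1 u2 u3 w : I -> rat) (N p1 p2 p3 : rat).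
Hypotheses (S0 : \sum_i w i = N) (S1 : \sum_i u1 i * w i = N * p1)
  (S2 : \sum_i u2 i * w i = N * p2) (S3 : \sum_i u3 i * w i = N * p3)
  (S12 : \sum_i u1 i * u2 i * w i = N * p1 * p2)
  (S13 : \sum_i u1 i * u3 i * w i = N * p1 * p3)
  (S23 : \sum_i u2 i * u3 i * w i = N * p2 * p3)
  (S123 : \sum_i u1 i * u2 i * u3 i * w i = N * p1 * p2 * p3).

Lemma prod3 a1 b1 a2 b2 a3 b3 :
  \sum_i (a1 + b1 * u1 i) * (a2 + b2 * u2 i) * (a3 + b3 * u3 i) * w i
  = N * (a1 + b1 * p1) * (a2 + b2 * p2) * (a3 + b3 * p3).
Proof.
have E : forall i, (a1 + b1 * u1 i) * (a2 + b2 * u2 i) * (a3 + b3 * u3 i) * w i = a1*a2*a3 * w i + a2*a3*b1 * (u1 i * w i)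
  + a1*a3*b2 * (u2 i * w i) + a1*a2*b3 * (u3 i * w i)
  + a3*b1*b2 * (u1 i * u2 i * w i) + a2*b1*b3 * (u1 i * u3 i * w i)
  + a1*b2*b3 * (u2 i * u3 i * w i) + b1*b2*b3 * (u1 i * u2 i * u3 i * w i) by move=> i; ring.
rewrite (eq_bigr _ (fun i _ => E i)).
rewrite !big_split /= -!mulr_sumr S0 S1 S2 S3 S12 S13 S23 S123; ring.
Qed.
End Abs.

Lemma pair_sum (I : finType) (u1 u2 w : I -> rat) (N p1 p2 : rat) :
  \sum_i w i = N -> \sum_i u1 i * w i = N * p1 -> \sum_i u2 i * w i = N * p2 ->
  \sum_i (u1 i - p1) * (u2 i - p2) * w i = 0 ->
  \sum_i u1 i * u2 i * w i = N * p1 * p2.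
Proof.
move=> S0 S1 S2.
have E : forall i, (u1 i - p1) * (u2 i - p2) * w i = u1 i * u2 i * w i + (-p2) * (u1 i * w i)
  + (-p1) * (u2 i * w i) + p1 * p2 * w i by move=> i; ring.
rewrite (eq_bigr _ (fun i _ => E i)).
rewrite !big_split /= -!mulr_sumr S0 S1 S2 => h.
have -> : \sum_i u1 i * u2 i * w i = (\sum_i u1 i * u2 i * w i + - p2 * (N * p1) + - p1 * (N * p2) + p1 * p2 * N) + (p2 * (N * p1) + p1 * (N * p2) - p1 * p2 * N) by ring.
rewrite h; ring.
Qed.

Lemma trip_sum (I : finType) (u1 u2 u3 w : I -> rat) (N p1 p2 p3 : rat) :
  \sum_i w i = N -> \sum_i u1 i * w i = N * p1 -> \sum_i u2 i * w i = N * p2 ->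
  \sum_i u3 i * w i = N * p3 ->
  \sum_i u1 i * u2 i * w i = N * p1 * p2 ->
  \sum_i u1 i * u3 i * w i = N * p1 * p3 ->
  \sum_i u2 i * u3 i * w i = N * p2 * p3 ->
  \sum_i (u1 i - p1) * (u2 i - p2) * (u3 i - p3) * w i = 0 ->
  \sum_i u1 i * u2 i * u3 i * w i = N * p1 * p2 * p3.
Proof.
move=> S0 S1 S2 S3 S12 S13 S23.
have E : forall i, (u1 i - p1) * (u2 i - p2) * (u3 i - p3) * w i = u1 i * u2 i * u3 i * w i
  + (-p3) * (u1 i * u2 i * w i) + (-p2) * (u1 i * u3 i * w i) + (-p1) * (u2 i * u3 i * w i)
  + (p2* p3) * (u1 i * w i) + (p1* p3) * (u2 i * w i) + (p1* p2) * (u3 i * w i)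
  + (-(p1* p2* p3)) * w i by move=> i; ring.
rewrite (eq_bigr _ (fun i _ => E i)).
rewrite !big_split /= -!mulr_sumr S0 S1 S2 S3 S12 S13 S23 => h.
set s := \sum_i _ in h *.
have -> : s = (s + - p3 * (N * p1 * p2) + - p2 * (N * p1 * p3) + - p1 * (N * p2 * p3) +
     p2 * p3 * (N * p1) + p1 * p3 * (N * p2) + p1 * p2 * (N * p3) + - (p1 * p2 * p3) * N) + 
     (p3 * (N * p1 * p2) + p2 * (N * p1 * p3) + p1 * (N * p2 * p3) -
     p2 * p3 * (N * p1) - p1 * p3 * (N * p2) - p1 * p2 * (N * p3) + (p1 * p2 * p3) * N) by ring.
rewrite h; ring.
Qed.

Lemma card_sum n (P : pred 'I_n) : (#|[set q | P q]|)%:R = \sum_q ind (P q).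
Proof.
rewrite -sum1_card natr_sum big_mkcond /=; apply: eq_bigr => q _.
by rewrite inE /ind; case: (P q).
Qed.

Lemma indA a b : ind (a && b) = ind a * ind b.
Proof. by case: a; case: b; rewrite /ind /= ?mulr1 ?mulr0 ?mul0r. Qed.

Lemma ind_lab (c x l : bool) : ind (c == x) =
  (x != l)%:R + (if x == l then 1 else -1) * ind (c == l).
Proof. by case: c; case: x; case: l; rewrite /ind /=; ring. Qed.

Lemma reassoc (N Q A B C : rat) : N * A * B * C / Q = N / Q * (A * B * C).
Proof. ring. Qed.

Theorem theorem3 (Q : nat) (t ci cj ck : 'I_Q -> bool) :
  (1 <= Qcnt t la)%N -> (1 <= Qcnt t lb)%N ->
  error_independent t ci cj ck ->
  ~ (alpha ci cj ck = 0 /\ gamma ci cj ck = 0) ->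
  forall x : algC,
    ratr (alpha ci cj ck) * x ^+ 2 - ratr (alpha ci cj ck) * x
      + ratr (gamma ci cj ck) = 0 ->
    (exists r : rat, x = ratr r) /\
    (x = ratr (prevalence t la) \/ x = ratr (prevalence t lb)).
Proof.
move=> Ha Hb Hind Hnz x Hx.
have HN : forall l, (Qcnt t l)%:R != 0 :> rat.
  by case; rewrite pnatr_eq0 -lt0n.
have H0 : forall l, \sum_q ind (t q == l) = (Qcnt t l)%:R.
  by move=> l; rewrite /Qcnt card_sum.
have H1 : forall c l, \sum_q ind (c q == l) * ind (t q == l) = (Qcnt t l)%:R * acc t c l.
  move=> c l; rewrite /acc mulrC divfK ?HN // card_sum.
  by apply: eq_bigr => q _; rewrite indA.
have G2 : forall c d l, Gamma2 t c d l = 0 ->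
    \sum_q (ind (c q == l) - acc t c l) * (ind (d q == l) - acc t d l) * ind (t q == l) = 0.
  move=> c d l; rewrite /Gamma2 => /eqP; rewrite mulf_eq0 invr_eq0 (negbTE (HN l)) /=.
  by move/eqP.
have G3 : forall l, Gamma3 t ci cj ck l = 0 ->
    \sum_q (ind (ci q == l) - acc t ci l) * (ind (cj q == l) - acc t cj l)
       * (ind (ck q == l) - acc t ck l) * ind (t q == l) = 0.
  move=> l; rewrite /Gamma3 => /eqP; rewrite mulf_eq0 invr_eq0 (negbTE (HN l)) /=.
  by move/eqP.
have P2 : forall c d l, Gamma2 t c d l = 0 ->
    \sum_q ind (c q == l) * ind (d q == l) * ind (t q == l)
      = (Qcnt t l)%:R * acc t c l * acc t d l.
  move=> c d l /G2 h.
  exact: (@pair_sum _ (fun q => ind (c q == l)) (fun q => ind (d q == l))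
           (fun q => ind (t q == l)) _ _ _ (H0 l) (H1 c l) (H1 d l) h).
have FL : forall l x y z,
    \sum_q ind (ci q == x) * ind (cj q == y) * ind (ck q == z) * ind (t q == l)
    = (Qcnt t l)%:R * ((x != l)%:R + (if x == l then 1 else -1) * acc t ci l)
        * ((y != l)%:R + (if y == l then 1 else -1) * acc t cj l)
        * ((z != l)%:R + (if z == l then 1 else -1) * acc t ck l).
  move=> l x0 y0 z0.
  have [h12 h13 h23 h123] := Hind l.
  have E : forall q, ind (ci q == x0) * ind (cj q == y0) * ind (ck q == z0) * ind (t q == l)
     = ((x0 != l)%:R + (if x0 == l then 1 else -1) * ind (ci q == l))
       * ((y0 != l)%:R + (if y0 == l then 1 else -1) * ind (cj q == l))
       * ((z0 != l)%:R + (if z0 == l then 1 else -1) * ind (ck q == l)) * ind (t q == l).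
    by move=> q; rewrite -!ind_lab.
  rewrite (eq_bigr _ (fun q _ => E q)).
  apply: (@prod3 _ (fun q => ind (ci q == l)) (fun q => ind (cj q == l))
           (fun q => ind (ck q == l)) (fun q => ind (t q == l))).
  - exact: H0.
  - exact: H1.
  - exact: H1.
  - exact: H1.
  - exact: P2.
  - exact: P2.
  - exact: P2.
  - apply: (@trip_sum _ (fun q => ind (ci q == l)) (fun q => ind (cj q == l))
           (fun q => ind (ck q == l)) (fun q => ind (t q == l))).
    + exact: H0.
    + exact: H1.
    + exact: H1.
    + exact: H1.
    + exact: P2.
    + exact: P2.
    + exact: P2.
    + exact: G3.
set Na : rat := (Qcnt t la)%:R.
set Nb : rat := (Qcnt t lb)%:R.
have HQ : (Q%:R : rat) = Na + Nb.
  rewrite /Na /Nb -!H0 -big_split /=.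
  rewrite (eq_bigr (fun _ => 1)); last by move=> q _; case: (t q).
  by rewrite sumr_const card_ord.
have HQ0 : (Q%:R : rat) != 0.
  rewrite HQ; apply: lt0r_neq0; apply: ltr_wpDr; first by rewrite /Nb ler0n.
  by rewrite /Na ltr0n.
set pa := Na / Q%:R.
set pb := Nb / Q%:R.
have Hpb : pb = 1 - pa.
  by rewrite /pa /pb; apply: (mulIf HQ0); rewrite mulrBl !divfK // mul1r HQ; ring.
have Hf : forall x y z, freq ci cj ck x y z =
    pa * (((x != la)%:R + (if x == la then 1 else -1) * acc t ci la)
        * ((y != la)%:R + (if y == la then 1 else -1) * acc t cj la)
        * ((z != la)%:R + (if z == la then 1 else -1) * acc t ck la))
  + pb * (((x != lb)%:R + (if x == lb then 1 else -1) * acc t ci lb)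
        * ((y != lb)%:R + (if y == lb then 1 else -1) * acc t cj lb)
        * ((z != lb)%:R + (if z == lb then 1 else -1) * acc t ck lb)).
  move=> x0 y0 z0; rewrite /freq card_sum.
  have E : forall q, ind [&& ci q == x0, cj q == y0 & ck q == z0] =
     ind (ci q == x0) * ind (cj q == y0) * ind (ck q == z0) * ind (t q == la)
   + ind (ci q == x0) * ind (cj q == y0) * ind (ck q == z0) * ind (t q == lb).
    by move=> q; rewrite !indA -mulrDr; case: (t q); rewrite /ind /=; ring.
  rewrite (eq_bigr _ (fun q _ => E q)) big_split /= !FL /pa /pb -/Na -/Nb.
  by rewrite mulrDl !reassoc.
have ea : prevalence t la = pa by [].
have eb : prevalence t lb = pb by [].
clearbody pa pb.
have Hg : gamma ci cj ck = pa * pb * alpha ci cj ck.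
  rewrite /gamma /alpha /D_ijk /D_ij /D_ik /D_jk /f_bi /f_bj /f_bk !Hf /=.
  rewrite Hpb; ring.
have HA : alpha ci cj ck != 0.
  by apply/eqP => h; apply: Hnz; split => //; rewrite Hg h mulr0.
have Hprod : ratr (alpha ci cj ck) * ((x - ratr pa) * (x - ratr pb)) = 0 :> algC.
  rewrite -Hx Hg !rmorphM /= Hpb rmorphB rmorph1 /=; ring.
move/eqP: Hprod; rewrite mulf_eq0 fmorph_eq0 (negbTE HA) /= mulf_eq0 !subr_eq0.
case/orP => /eqP ->; split; try (by eexists); rewrite ?ea ?eb; by [left|right].
Qed.
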